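(* Let $R$ be a ring with $p\in J(R)$ for some prime $p$, and let $G$ be a locally finite $p$-group. Then $\Delta(R)G\subseteq\Delta(RG)$, i.e. every element $\sum_{g\in G}a_g g\in RG$ with all coefficients $a_g\in\Delta(R)$ lies in $\Delta(RG)$.
   Context: All rings are associative with identity; $J(R)$ is the Jacobson radical, $U(R)$ the group of units. $\Delta(R)=\{x\in R: x+u\in U(R)\text{ for all }u\in U(R)\}$. A group is locally finite if every finitely generated subgroup is finite. $RG$ denotes the group ring. *)

(* Defs.v *)
From HB Require Import structures.
From mathcomp Require Import all_boot all_order all_algebra.
From mathcomp Require Import finmap.
Set Implicit Arguments. Unset Strict Implicit. Unset Printing Implicit Defensive.
Import GRing.Theory.
Local Open Scope ring_scope.


Section RingNotions.
Variable R : pzRingType.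

Definition is_unit (x : R) : Prop := exists y : R, x * y = 1 /\ y * x = 1.

Definition Delta (x : R) : Prop := forall u : R, is_unit u -> is_unit (x + u).

Definition left_ideal (I : R -> Prop) : Prop :=
  [/\ I 0, (forall x y, I x -> I y -> I (x - y)) & (forall r x, I x -> I (r * x))].

Definition maximal_left_ideal (I : R -> Prop) : Prop :=
  [/\ left_ideal I, ~ I 1 &
      forall Jd : R -> Prop, left_ideal Jd -> ~ Jd 1 ->
        (forall x, I x -> Jd x) -> forall x, Jd x -> I x].

Definition jacobson (x : R) : Prop :=
  forall I : R -> Prop, maximal_left_ideal I -> I x.
End RingNotions.

Definition is_group (G : Type) (gmul : G -> G -> G) (gone : G) (ginv : G -> G)
  : Prop :=
  [/\ forall x y z, gmul x (gmul y z) = gmul (gmul x y) z,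
      forall x, gmul gone x = x, forall x, gmul x gone = x,
      forall x, gmul (ginv x) x = gone & forall x, gmul x (ginv x) = gone].

Section Groups.
Variables (G : choiceType) (gmul : G -> G -> G) (gone : G) (ginv : G -> G).

Definition is_subgroup (H : G -> Prop) : Prop :=
  [/\ H gone, (forall x y, H x -> H y -> H (gmul x y)) &
      (forall x, H x -> H (ginv x))].

Definition gen_subgroup (s : seq G) (x : G) : Prop :=
  forall H : G -> Prop, is_subgroup H -> (forall y, y \in s -> H y) -> H x.

Definition finite_subset (A : G -> Prop) : Prop :=
  exists t : seq G, forall x, A x -> x \in t.

Definition locally_finite : Prop :=
  forall s : seq G, finite_subset (gen_subgroup s).

Definition gpow (x : G) (n : nat) : G := iter n (gmul x) gone.

Definition p_group (p : nat) : Prop :=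
  forall x : G, exists n : nat, gpow x (p ^ n) = gone.
End Groups.

Section GroupRing.
Variables (R : pzRingType) (G : choiceType) (gmul : G -> G -> G) (gone : G).

Local Notation grpring := {fsfun G -> R with (0 : R)}.

Definition gr_one : grpring := [fsfun g in [fset gone]%fset => 1 | 0].

Definition gr_add (a b : grpring) : grpring :=
  [fsfun g in (finsupp a `|` finsupp b)%fset => a g + b g | 0].

Definition gr_mul (a b : grpring) : grpring :=
  [fsfun g in [fset gmul h k | h in finsupp a, k in finsupp b]%fset =>
     \sum_(h <- finsupp a) \sum_(k <- finsupp b | gmul h k == g) a h * b k | 0].

Definition gr_is_unit (x : grpring) : Prop :=
  exists y : grpring, gr_mul x y = gr_one /\ gr_mul y x = gr_one.

Definition gr_Delta (x : grpring) : Prop :=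
  forall u : grpring, gr_is_unit u -> gr_is_unit (gr_add x u).
End GroupRing.
Notation grpring R G := {fsfun G -> R with (0 : R)}.

(* Main.v *)
Require Import Defs.
From HB Require Import structures.
From mathcomp Require Import all_boot all_order all_algebra all_fingroup all_solvable.
From mathcomp Require Import finmap.
From mathcomp Require boolp classical_sets.
From mathcomp Require Import zify.
Require Import Defs.
Set Implicit Arguments. Unset Strict Implicit. Unset Printing Implicit Defensive.
Import GRing.Theory.
Local Open Scope ring_scope.

Lemma NNPP' (P : Prop) : ~ ~ P -> P.
Proof. by move=> nnP; case: (boolp.pselect P) => // /nnP. Qed.

Section RingGen.
Variable S : pzRingType.

Lemma li_add (I : S -> Prop) : left_ideal I -> forall x y, I x -> I y -> I (x + y).
Proof.
case=> I0 IB _ x y Ix Iy; have := IB x (0 - y) Ix (IB 0 y I0 Iy).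
by rewrite sub0r opprK.
Qed.

Lemma li_opp (I : S -> Prop) : left_ideal I -> forall x, I x -> I (- x).
Proof. by case=> I0 IB _ x Ix; have := IB 0 x I0 Ix; rewrite sub0r. Qed.

Lemma li_mul (I : S -> Prop) : left_ideal I -> forall r x, I x -> I (r * x).
Proof. by case=> _ _ IM. Qed.

Lemma li_sum (I : S -> Prop) : left_ideal I -> forall (T : Type) (s : seq T) F,
  (forall i, I (F i)) -> I (\sum_(i <- s) F i).
Proof.
move=> LI T s F IF; elim: s => [|a s IH]; first by rewrite big_nil; case: LI.
by rewrite big_cons; apply: li_add.
Qed.

Lemma exists_max (L : S -> Prop) : left_ideal L -> ~ L 1 ->
  exists M, maximal_left_ideal M /\ (forall x, L x -> M x).
Proof.
move=> LL nL1.
pose P := fun I : S -> Prop =>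
  I = (fun _ => False) \/ [/\ left_ideal I, ~ I 1 & forall x, L x -> I x].
have memI : forall I, P I -> forall x, I x -> [/\ left_ideal I, ~ I 1 & forall x, L x -> I x].
  by move=> I [->//|//].
have [A [PA Amax]] : exists A : classical_sets.set S, P A /\
    (forall B, classical_sets.proper A B -> ~ P B).
  apply: classical_sets.Zorn_bigcup => F FP Ftot.
  case: (boolp.pselect (exists X, F X /\ exists x, X x)) => [[X0 [FX0 [x0 X0x0]]]|nex].
  - right.
    have [LX0 _ LsX0] := memI _ (FP _ FX0) _ X0x0.
    have Fid : forall X x, F X -> X x -> [/\ left_ideal X, ~ X 1 & forall x, L x -> X x].
      by move=> X x FX Xx; exact: memI _ (FP _ FX) _ Xx.
    split.
    + split.
      * by exists X0 => //; case: LX0.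
      * move=> x y [X1 FX1 X1x] [X2 FX2 X2y].
        case: (Ftot _ _ FX1 FX2) => sub.
        - exists X2 => //; have [[_ IB _] _ _] := Fid _ _ FX2 X2y; exact: IB (sub _ X1x) X2y.
        - exists X1 => //; have [[_ IB _] _ _] := Fid _ _ FX1 X1x; exact: IB X1x (sub _ X2y).
      * move=> r x [X FX Xx]; exists X => //.
        by have [[_ _ IM] _ _] := Fid _ _ FX Xx; exact: IM.
    + by move=> [X FX X1]; have [_ nX1 _] := Fid _ _ FX X1.
    + by move=> x Lx; exists X0 => //; exact: LsX0.
  - left; apply: boolp.funext => x; apply: boolp.propext; split=> // [[X FX Xx]].
    by apply: nex; exists X; split=> //; exists x.
have LP : P L by right; split.
case: PA => [A0|[LA nA1 LsA]].
  exfalso; apply: (Amax L) => //; rewrite A0; split=> //.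
  by move=> /(_ 0); case: LL => L0 _ _ /(_ L0).
exists A; split=> //; split=> // Jd LJ nJ1 AsJ.
apply: NNPP' => nsub.
apply: (Amax Jd); last by right; split=> // x /LsA /AsJ.
split; first by move=> x /AsJ.
by move=> JsA; apply: nsub => x /JsA.
Qed.

Lemma max_gen (M : S -> Prop) a : maximal_left_ideal M -> ~ M a ->
  exists m s, M m /\ 1 = m + s * a.
Proof.
move=> [LM nM1 Mmax] nMa.
pose Jd := fun x => exists m s, M m /\ x = m + s * a.
have LJ : left_ideal Jd.
  split.
  - by exists 0, 0; split; [case: LM|rewrite mul0r addr0].
  - move=> x y [m1 [s1 [Mm1 ->]]] [m2 [s2 [Mm2 ->]]].
    exists (m1 - m2), (s1 - s2); split; first by case: LM => _ IB _; exact: IB.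
    by rewrite mulrBl opprD addrACA.
  - move=> r x [m [s [Mm ->]]]; exists (r * m), (r * s); split.
      by case: LM => _ _ IM; exact: IM.
    by rewrite mulrDr mulrA.
apply: NNPP' => nJ.
have nJ1 : ~ Jd 1 by move=> [m [s [Mm e]]]; apply: nJ; exists m, s.
apply: nMa; apply: (Mmax Jd LJ nJ1).
  by move=> x Mx; exists x, 0; rewrite mul0r addr0.
by exists 0, 1; split; [case: LM|rewrite mul1r add0r].
Qed.

Lemma left_inv_unit (I : S -> Prop) : (forall s x, I x -> I (s * x)) ->
  (forall w, I w -> exists a, a * (1 - w) = 1) -> forall w, I w -> is_unit (1 - w).
Proof.
move=> IM Linv w Iw; have [a ha] := Linv w Iw.
have ea : a = 1 - ((- a) * w) by rewrite mulNr opprK -{1}ha mulrBr mulr1 subrK.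
have [b hb] := Linv _ (IM (- a) w Iw); rewrite -ea in hb.
have eb : b = 1 - w by have := congr1 (fun z => b * z) ha; rewrite /= mulrA hb mul1r mulr1 => <-.
by exists a; split=> //; rewrite -eb.
Qed.

End RingGen.

Lemma jac_unit (R : pzRingType) (p : nat) : jacobson (p%:R : R) ->
  forall r : R, is_unit (1 - p%:R * r).
Proof.
move=> jac r.
pose I := fun x : R => exists r, x = p%:R * r.
have IM : forall s x, I x -> I (s * x).
  move=> s x [r' ->]; exists (s * r').
  by rewrite !mulr_natl mulrnAr.
apply: (left_inv_unit IM); last by exists r.
move=> w [r' ->].
apply: NNPP' => nex.
pose L := fun x : R => exists a, x = a * (1 - p%:R * r').
have LL : left_ideal L.
  split.
  - by exists 0; rewrite mul0r.
  - by move=> x y [a ->] [b ->]; exists (a - b); rewrite mulrBl.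
  - by move=> s x [a ->]; exists (s * a); rewrite mulrA.
have nL1 : ~ L 1 by move=> [a e]; apply: nex; exists a.
have [M [MM LsM]] := exists_max LL nL1.
have Mp := jac M MM.
have [LM nM1 _] := MM.
apply: nM1.
have -> : (1 : R) = (1 - p%:R * r') + r' * p%:R.
  by rewrite (commr_nat r' p) subrK.
apply: li_add => //; first by apply: LsM; exists 1; rewrite mul1r.
exact: li_mul.
Qed.

Section GRingDef.
Variables (R : pzRingType) (gT : finGroupType).
Definition gring := {ffun gT -> R}.
HB.instance Definition _ := GRing.Zmodule.copy gring {ffun gT -> R}.

Definition gmulr (a b : gring) : gring :=
  [ffun g => \sum_(h : gT) a h * b (h^-1 * g)%g].
Definition gone1 : gring := [ffun g => (g == 1%g)%:R].

Lemma gmulrA : associative gmulr.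
Proof.
move=> a b c; apply/ffunP => g; rewrite !ffunE.
under eq_bigr do rewrite ffunE mulr_sumr.
under [RHS]eq_bigr do rewrite ffunE mulr_suml.
rewrite [RHS]exchange_big /=; apply: eq_bigr => h _.
rewrite (reindex_inj (mulgI (h^-1)%g)) /=; apply: eq_bigr => k _.
by rewrite mulrA invMg invgK !mulgA mulgK.
Qed.

Lemma gmul1r : left_id gone1 gmulr.
Proof.
move=> b; apply/ffunP => g; rewrite ffunE (bigD1 1%g) //= big1 => [|h /negbTE h1].
  by rewrite ffunE eqxx mul1r invg1 mul1g addr0.
by rewrite ffunE h1 mul0r.
Qed.

Lemma gmulr1 : right_id gone1 gmulr.
Proof.
move=> a; apply/ffunP => g; rewrite ffunE (bigD1 g) //= big1 => [|h hg].
  by rewrite ffunE mulVg eqxx mulr1 addr0.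
by rewrite ffunE -eq_mulVg1 (negbTE hg) mulr0.
Qed.

Lemma gmulrDl : left_distributive gmulr +%R.
Proof.
move=> a b c; apply/ffunP => g; rewrite !ffunE -big_split /=.
by apply: eq_bigr => h _; rewrite ffunE mulrDl.
Qed.

Lemma gmulrDr : right_distributive gmulr +%R.
Proof.
move=> a b c; apply/ffunP => g; rewrite !ffunE -big_split /=.
by apply: eq_bigr => h _; rewrite ffunE mulrDr.
Qed.

HB.instance Definition _ := GRing.Zmodule_isPzRing.Build gring
  gmulrA gmul1r gmulr1 gmulrDl gmulrDr.

Lemma gmulE (a b : gring) g : (a * b) g = \sum_(h : gT) a h * b (h^-1 * g)%g.
Proof. by rewrite /GRing.mul /= ffunE. Qed.
Lemma goneE g : (1 : gring) g = (g == 1%g)%:R.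
Proof. by rewrite /GRing.one /= ffunE. Qed.
Lemma gaddE (a b : gring) g : (a + b) g = a g + b g.
Proof. by rewrite ffunE. Qed.
Lemma goppE (a : gring) g : (- a) g = - a g.
Proof. by rewrite ffunE. Qed.
Lemma gsubE (a b : gring) g : (a - b) g = a g - b g.
Proof. by rewrite gaddE goppE. Qed.
Lemma gzeroE g : (0 : gring) g = 0.
Proof. by rewrite ffunE. Qed.

Definition gC (r : R) : gring := [ffun g => if g == 1%g then r else 0].
Definition gD (g : gT) : gring := [ffun h => (h == g)%:R].
Definition eps (a : gring) : R := \sum_(g : gT) a g.

Lemma gCmulE r (a : gring) : gC r * a = [ffun g => r * a g].
Proof.
apply/ffunP => g; rewrite gmulE !ffunE (bigD1 1%g) //= big1 => [|h /negbTE h1].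
  by rewrite ffunE eqxx invg1 mul1g addr0.
by rewrite ffunE h1 mul0r.
Qed.

Lemma mulgCE (a : gring) r : a * gC r = [ffun g => a g * r].
Proof.
apply/ffunP => g; rewrite gmulE !ffunE (bigD1 g) //= big1 => [|h hg].
  by rewrite ffunE mulVg eqxx addr0.
by rewrite ffunE -eq_mulVg1 (negbTE hg) mulr0.
Qed.

Lemma gCM r s : gC r * gC s = gC (r * s).
Proof. by rewrite gCmulE; apply/ffunP => g; rewrite !ffunE; case: eqP; rewrite ?mulr0. Qed.
Lemma gC1 : gC 1 = 1.
Proof. by apply/ffunP => g; rewrite goneE ffunE; case: eqP. Qed.
Lemma gC0 : gC 0 = 0.
Proof. by apply/ffunP => g; rewrite !ffunE; case: eqP. Qed.
Lemma gCD r s : gC (r + s) = gC r + gC s.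
Proof. by apply/ffunP => g; rewrite !ffunE; case: eqP; rewrite ?addr0. Qed.
Lemma gCN r : gC (- r) = - gC r.
Proof. by apply/ffunP => g; rewrite !ffunE; case: eqP; rewrite ?oppr0. Qed.
Lemma gCB r s : gC (r - s) = gC r - gC s.
Proof. by rewrite gCD gCN. Qed.
Lemma gCn n : gC n%:R = n%:R.
Proof. by elim: n => [|n IH]; rewrite ?gC0 // -addn1 !natrD gCD IH gC1. Qed.

Lemma gCD_comm r g : gC r * gD g = gD g * gC r.
Proof.
by rewrite gCmulE mulgCE; apply/ffunP => h; rewrite !ffunE; case: eqP; rewrite ?mulr0 ?mul0r ?mulr1 ?mul1r.
Qed.

Lemma gDM g h : gD g * gD h = gD (g * h)%g.
Proof.
apply/ffunP => x; rewrite gmulE ffunE (bigD1 g) //= big1 => [|k /negbTE kg].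
  by rewrite !ffunE eqxx mul1r addr0 -(inj_eq (mulgI g)) mulKVg.
by rewrite ffunE kg mul0r.
Qed.

Lemma gD1 : gD 1%g = 1.
Proof. by apply/ffunP => g; rewrite goneE /gD ?ffunE. Qed.

Lemma gdecomp (a : gring) : a = \sum_(g : gT) gC (a g) * gD g.
Proof.
apply/ffunP => x; rewrite sum_ffunE (bigD1 x) //= big1 => [|g gx].
  by rewrite gCmulE !ffunE eqxx mulr1 addr0.
by rewrite gCmulE !ffunE eq_sym (negbTE gx) mulr0.
Qed.

Lemma epsM (a b : gring) : eps (a * b) = eps a * eps b.
Proof.
rewrite /eps mulr_suml; under eq_bigr do rewrite gmulE.
rewrite exchange_big /=; apply: eq_bigr => h _; rewrite mulr_sumr.
by rewrite (reindex_inj (mulgI h)) /=; apply: eq_bigr => k _; rewrite mulKg.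
Qed.
Lemma eps1 : eps 1 = 1.
Proof.
rewrite /eps (bigD1 1%g) //= big1 => [|h /negbTE h1]; first by rewrite goneE eqxx addr0.
by rewrite goneE h1.
Qed.
Lemma epsD (a b : gring) : eps (a + b) = eps a + eps b.
Proof. by rewrite /eps -big_split; apply: eq_bigr => g _; rewrite gaddE. Qed.
Lemma epsN (a : gring) : eps (- a) = - eps a.
Proof. by rewrite /eps -sumrN; apply: eq_bigr => g _; rewrite goppE. Qed.
Lemma epsB (a b : gring) : eps (a - b) = eps a - eps b.
Proof. by rewrite epsD epsN. Qed.
Lemma epsC r : eps (gC r) = r.
Proof.
rewrite /eps (bigD1 1%g) //= big1 => [|h /negbTE h1]; first by rewrite ffunE eqxx addr0.
by rewrite ffunE h1.
Qed.
Lemma epsn n : eps n%:R = n%:R.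
Proof. by rewrite -gCn epsC. Qed.

End GRingDef.
Arguments gC {R gT} r.
Arguments gD {R gT} g.

Record fgdata := FGData {
  fgT :> finType; fgm : fgT -> fgT -> fgT; fg1 : fgT; fgi : fgT -> fgT;
  fgA : associative fgm; fg1m : left_id fg1 fgm; fgVm : left_inverse fg1 fgi fgm }.
Definition fgtype (F : fgdata) : Type := fgT F.
HB.instance Definition _ (F : fgdata) := Finite.copy (fgtype F) (fgT F).
HB.instance Definition _ (F : fgdata) :=
  Finite_isGroup.Build (fgtype F) (@fgA F) (@fg1m F) (@fgVm F).

Section Fix.
Variables (R : pzRingType) (gT : finGroupType) (p : nat).
Hypothesis pr : prime p.
Hypothesis pg : (p.-group [set: gT])%g.
Variable M : gring R gT -> Prop.
Hypothesis LM : left_ideal M.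
Hypothesis Mp : M p%:R.
Variable v : gring R gT.
Hypothesis nMv : ~ M v.
Local Notation gD := (@gD R gT).
Local Notation gC := (@gC R gT).

Definition Ydata := @FGData {ffun gT -> 'Z_p} +%R 0 -%R
  (@addrA _) (@add0r _) (@addNr _).
Definition YG := fgtype Ydata.
Definition toY (c : YG) : {ffun gT -> 'Z_p} := c.
Definition ofY (c : {ffun gT -> 'Z_p}) : YG := c.

Definition phi (c : YG) : gring R gT :=
  \sum_(h : gT) gC ((toY c h : nat)%:R) * (gD h * v).


Definition phi' (f : gT -> R) : gring R gT := \sum_(h : gT) gC (f h) * (gD h * v).

Lemma phiE c : phi c = phi' (fun h => (toY c h : nat)%:R).
Proof. by []. Qed.

Lemma phi'D f f' : phi' f + phi' f' = phi' (fun h => f h + f' h).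
Proof. by rewrite /phi' -big_split /=; apply: eq_bigr => h _; rewrite gCD mulrDl. Qed.

Lemma phi'_modp f f' : (forall h, exists k, f h - f' h = p%:R * k) ->
  M (phi' f - phi' f').
Proof.
move=> hk; rewrite /phi' -sumrB; apply: (li_sum LM) => h.
have [k ek] := hk h; rewrite -mulrBl -gCB ek -gCM gCn -mulrA -commr_nat.
exact: li_mul.
Qed.

Let P1 : (1 < p)%N := prime_gt1 pr.
Let Pc : (Zp_trunc p).+2 = p := Zp_cast P1.

Lemma valZpD (a b : 'Z_p) :
  exists k : R, (((a + b)%R : 'Z_p) : nat)%:R - ((a : nat)%:R + (b : nat)%:R) = p%:R * k.
Proof.
exists (- ((((a : nat) + b) %/ p)%N)%:R).
have -> : (((a + b)%R : 'Z_p) : nat) = (((a : nat) + b) %% p)%N by rewrite /=; exact: (congr1 (modn _) Pc).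
rewrite -natrD {2}(divn_eq ((a : nat) + b)%N p) natrD natrM opprD addrCA subrr addr0.
by rewrite mulrN (commr_nat _ p).
Qed.

Lemma phiM (c d : YG) : M (phi (c * d)%g - (phi c + phi d)).
Proof.
rewrite !phiE phi'D; apply: phi'_modp => h.
have -> : toY (c * d)%g h = toY c h + toY d h by rewrite /toY ffunE.
exact: valZpD.
Qed.

Lemma phi1 : phi 1%g = 0.
Proof.
rewrite /phi big1 // => h _.
have -> : ((toY 1%g h : 'Z_p) : nat) = 0%N by rewrite /toY ffunE.
by rewrite gC0 mul0r.
Qed.

Definition Kset : {set YG} := [set c | boolp.asbool (M (phi c))].

Lemma inK c : (c \in Kset) <-> M (phi c).
Proof. by rewrite inE; split=> [/boolp.asboolP|?]; [|apply/boolp.asboolP]. Qed.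

Lemma Kgroup : group_set Kset.
Proof.
apply/group_setP; split; first by apply/inK; rewrite phi1; case: LM.
move=> c d /inK Mc /inK Md; apply/inK.
have := li_add LM (phiM c d) (li_add LM Mc Md).
by rewrite subrK.
Qed.
Definition KG := Group Kgroup.

Definition actY (c : YG) (g : gT) : YG := ofY [ffun h => toY c (g * h)%g].
Lemma actY1 : actY^~ 1%g =1 id.
Proof. by move=> c; apply/ffunP => h; rewrite /actY /ofY ffunE mul1g. Qed.
Lemma actYM c : act_morph actY c.
Proof. by move=> a b; apply/ffunP => h; rewrite /actY /ofY /toY !ffunE mulgA. Qed.
Definition toA := TotalAction actY1 actYM.

Lemma actYE c g : toA c g = actY c g.
Proof. by []. Qed.

Lemma phi_act c g : phi (actY c g) = gD (g^-1)%g * phi c.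
Proof.
rewrite /phi mulr_sumr [RHS](reindex_inj (mulgI g)) /=; apply: eq_bigr => h _.
rewrite /actY /ofY /toY ffunE [RHS]mulrA -gCD_comm -mulrA [gD _ * (gD _ * v)]mulrA gDM.
by rewrite mulKg.
Qed.

Lemma actY_mul c d g : actY (c * d)%g g = (actY c g * actY d g)%g.
Proof. by apply/ffunP => h; rewrite /actY /ofY /toY !ffunE. Qed.

Lemma actK c g : c \in Kset -> actY c g \in Kset.
Proof. by move=> /inK Mc; apply/inK; rewrite phi_act; exact: li_mul. Qed.

Lemma act_coset c g : ((toA^*)%act (Kset :* c) g = Kset :* actY c g)%g.
Proof.
apply/setP => y; rewrite /setact; apply/imsetP/idP.
  move=> [x]; rewrite mem_rcoset => xK ->; rewrite mem_rcoset actYE.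
  have -> : (x = (x * c^-1) * c)%g by rewrite mulgKV.
  rewrite actY_mul mulgK; exact: actK.
rewrite mem_rcoset => yK; exists (actY (y * (actY c g)^-1) (g^-1) * c)%g.
  rewrite mem_rcoset mulgK; exact: actK.
rewrite [RHS]/(toA _ _) /= actY_mul -actYM mulVg actY1 /= mulgKV //.
Qed.

Definition Xset : {set {set YG}} := rcosets Kset [set: YG].

Lemma actsX : [acts [set: gT], on Xset | (toA^*)%act].
Proof.
apply/actsP => g _ B; apply/rcosetsP/rcosetsP => [[c _ eB]|[c _ ->]].
  exists (actY c (g^-1)%g); first by rewrite inE.
  rewrite -act_coset -eB -(actM (toA^*)%act) mulgV.
  by rewrite (act1 (toA^*)%act).
by exists (actY c g); [rewrite inE | rewrite act_coset].
Qed.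


Lemma fixpt : exists v0, ~ M v0 /\ forall g, M (gD g * v0 - v0).
Proof.
pose c1 : YG := ofY [ffun h => if h == 1%g then 1 else 0].
have phic1 : phi c1 = v.
  rewrite /phi (bigD1 1%g) //= big1 => [|h /negbTE h1].
    rewrite /toY /c1 /ofY ffunE eqxx /= modn_small; last by rewrite Pc.
    by rewrite gC1 mul1r gD1 mul1r addr0.
  by rewrite /toY /c1 /ofY ffunE h1 gC0 mul0r.
have c1K : c1 \notin Kset by apply/negP => /inK; rewrite phic1.
have cardY : #|[set: YG]| = (p ^ #|gT|)%N.
  by rewrite cardsT /YG /= card_ffun card_ord Pc.
have Lag := Lagrange (subsetT KG).
have cardX : #|Xset| = #|[set: YG] : KG|%g by [].
have pX : (p %| #|Xset|)%N.
  have : (#|Xset| %| p ^ #|gT|)%N by rewrite -cardY -Lag cardX dvdn_mull.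
  move=> /(dvdn_pfactor _ _ pr) [m _ eX].
  case: m eX => [|m] eX; last by rewrite eX expnS dvdn_mulr.
  exfalso; move: c1K; rewrite /= in eX.
  have eK : Kset = [set: YG].
    apply/eqP; rewrite eqEcard subsetT /= -Lag -cardX eX muln1 //.
  by rewrite eK inE.
have fixmod := pgroup_fix_mod pg actsX.
have KX : Kset \in Xset by apply/rcosetsP; exists 1%g; rewrite ?inE // rcoset1.
have Kfix : Kset \in ('Fix_(Xset | (toA^*)%act)([set: gT]))%g.
  rewrite inE KX /=; apply/afixP => g _.
  rewrite -{1}(rcoset1 Kset) act_coset.
  have -> : actY 1%g g = 1%g by apply/ffunP => h; rewrite /actY /ofY /toY !ffunE.
  by rewrite rcoset1.
have pF : (p %| #|('Fix_(Xset | (toA^*)%act)([set: gT]))%g|)%N.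
  by move: pX; rewrite /dvdn fixmod.
have nsub : ~~ (('Fix_(Xset | (toA^*)%act)([set: gT]))%g \subset [set Kset]).
  apply/negP => /subset_leq_card; rewrite cards1 => le1.
  have gt0 : (0 < #|('Fix_(Xset | (toA^*)%act)([set: gT]))%g|)%N by apply/card_gt0P; exists Kset.
  have := dvdn_leq gt0 pF; have := prime_gt1 pr; lia.
have [B BF BnK] := subsetPn nsub.
move: BF; rewrite inE => /andP [BX /afixP Bfix].
case/rcosetsP: BX => c _ eB.
have cK : c \notin Kset.
  apply/negP => cK; move: BnK; rewrite inE eB.
  by rewrite (@rcoset_id _ KG c cK) eqxx.
exists (phi c); split; first by move=> Mc; move/negP: cK; apply; apply/inK.
move=> g.
have := Bfix (g^-1)%g (in_setT _); rewrite eB act_coset => e.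
have : actY c (g^-1)%g \in (Kset :* c)%g by rewrite -e; exact: (rcoset_refl KG).
rewrite mem_rcoset => /inK Mw.
have := phiM (actY c (g^-1)%g * c^-1)%g c; rewrite mulgKV phi_act invgK => Mx.
have := li_add LM Mx Mw.
by rewrite opprD addrA addrAC subrK.
Qed.

End Fix.
Lemma zmod_rearr (V : zmodType) (A B T C : V) : A + (B + (T + C)) - T = A + B + C.
Proof. by rewrite addrA [T + C]addrC addrA addrK. Qed.

Section Nak.
Variables (R : pzRingType) (gT : finGroupType) (p : nat).
Hypothesis hp : forall r : R, is_unit (1 - p%:R * r).
Variable q : gring R gT.
Let w0 : gring R gT := 1 - p%:R * q.
Local Notation gD := (@gD R gT).
Local Notation gC := (@gC R gT).

Let span (s : seq gT) (z : gring R gT) := exists a (f : gT -> R),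
  z = a * w0 + \sum_(h <- s) gC (f h) * gD h.

Let step g s : (forall z, span (g :: s) z) -> forall z, span s z.
Proof.
move=> H.
have [a [f e]] := H (gD g * q); rewrite big_cons in e.
have [u [_ hu]] := hp (f g).
set X := \sum_(h <- s) gC (f h) * gD h in e.
have e1 : gD g = gD g * w0 + p%:R * (gD g * q).
  by rewrite /w0 mulrBr mulr1 [p%:R * (gD g * q)]mulrA -(commr_nat (gD g) p) -mulrA subrK.
have e2 : gC (1 - p%:R * f g) * gD g = (gD g + p%:R * a) * w0 + p%:R * X.
  rewrite gCB gC1 -gCM gCn mulrBl mul1r {1}e1 e [p%:R * (a * w0 + _)]mulrDr [p%:R * (_ + X)]mulrDr [p%:R * (a * w0)]mulrA [p%:R * (gC _ * _)]mulrA mulrDl.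
  by rewrite zmod_rearr.
have eD : gD g = (gC u * (gD g + p%:R * a)) * w0 +
    \sum_(h <- s) gC (u * p%:R * f h) * gD h.
  have hC : gC u * gC (1 - p%:R * f g) = 1 by rewrite gCM hu gC1.
  rewrite -[LHS]mul1r -{1}hC -mulrA e2 mulrDr mulrA; congr (_ + _).
  rewrite /X !mulr_sumr; apply: eq_bigr => h _.
  by rewrite !mulrA -gCn !gCM.
move=> z; have [a' [f' e']] := H z; rewrite big_cons eD in e'.
exists (a' + gC (f' g) * (gC u * (gD g + p%:R * a))),
  (fun h => f' g * (u * p%:R * f h) + f' h).
rewrite e' [(a' + _) * w0]mulrDl [gC (f' g) * (_ + _)]mulrDr [gC (f' g) * (_ * w0)]mulrA -!addrA; congr (_ + (_ + _)).
rewrite mulr_sumr -big_split /=; apply: eq_bigr => h _.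
by rewrite mulrA gCM gCD mulrDl.
Qed.

Lemma nak_aux s : (forall z, span s z) -> span [::] 1.
Proof. by elim: s => [|g s IH] H; [exact: H | apply: IH; exact: step]. Qed.

Lemma nak : exists a, a * w0 = 1.
Proof.
have [a [f e]] := nak_aux (s := index_enum gT) (fun z => ex_intro _ 0
  (ex_intro _ (fun g => z g) (etrans (gdecomp z) (esym (eq_trans (congr1 (fun x => x + _) (mul0r w0)) (add0r _)))))).
by exists a; rewrite e big_nil addr0.
Qed.
End Nak.

Section Key.
Variables (R : pzRingType) (gT : finGroupType) (p : nat).
Hypothesis pr : prime p.
Hypothesis pg : (p.-group [set: gT])%g.
Hypothesis hp : forall r : R, is_unit (1 - p%:R * r).
Local Notation gD := (@gD R gT).
Local Notation gC := (@gC R gT).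
Local Notation S := (gring R gT).

Lemma gC_sum (I : Type) (s : seq I) (F : I -> R) :
  gC (\sum_(i <- s) F i) = \sum_(i <- s) gC (F i).
Proof.
elim: s => [|i s IH]; first by rewrite !big_nil gC0.
by rewrite !big_cons gCD IH.
Qed.

Lemma aug_left_inv (w : S) : eps w = 0 -> exists a, a * (1 - w) = 1.
Proof.
move=> ew; apply: NNPP' => nex.
pose L := fun x : S => exists a, x = a * (1 - w).
have LL : left_ideal L.
  split.
  - by exists 0; rewrite mul0r.
  - by move=> x y [a ->] [b ->]; exists (a - b); rewrite mulrBl.
  - by move=> s x [a ->]; exists (s * a); rewrite mulrA.
have nL1 : ~ L 1 by move=> [a e]; apply: nex; exists a.
have [M [MM LsM]] := exists_max LL nL1.
have [LM nM1 _] := MM.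
have Mp : M p%:R.
  apply: NNPP' => nMp; have [m [s [Mm e]]] := max_gen MM nMp.
  have [a ea] := nak hp s.
  apply: nM1; rewrite -ea.
  have -> : 1 - p%:R * s = m by rewrite (commr_nat s p) in e; rewrite {1}e addrK.
  exact: li_mul.
have [v0 [nMv0 Mv0]] := fixpt pr pg LM Mp nM1.
have Zv0 : forall z : S, eps z = 0 -> M (z * v0).
  move=> z ez.
  have -> : z * v0 = \sum_(g : gT) gC (z g) * (gD g * v0 - v0) + gC (eps z) * v0.
    rewrite /eps gC_sum mulr_suml -big_split /= {1}(gdecomp z) mulr_suml.
    by apply: eq_bigr => g _; rewrite mulrBr subrK mulrA.
  rewrite ez gC0 mul0r addr0; apply: (li_sum LM) => g.
  exact: li_mul.
have [m [t [Mm e1]]] := max_gen MM nMv0.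
apply: nM1.
have -> : (1 : S) = (1 - w) + (w * m + (w * t) * v0).
  by rewrite -mulrA -mulrDr -e1 mulr1 subrK.
apply: (li_add LM); first by apply: LsM; exists 1; rewrite mul1r.
apply: (li_add LM); first exact: li_mul.
by apply: Zv0; rewrite epsM ew mul0r.
Qed.

Lemma eps_left_inv (y : S) : is_unit (eps y) -> exists b, b * y = 1.
Proof.
move=> [c' [hc1 hc2]].
have [a ea] : exists a, a * (1 - (1 - gC c' * y)) = 1.
  by apply: aug_left_inv; rewrite epsB eps1 epsM epsC hc2 subrr.
by exists (a * gC c'); rewrite -mulrA -ea subKr.
Qed.

Lemma eps_unit (y : S) : is_unit (eps y) -> is_unit y.
Proof.
move=> uy; have [b eb] := eps_left_inv uy.
have ub : is_unit (eps b).
  have [c' [hc1 hc2]] := uy.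
  have e2 : eps b * eps y = 1 by rewrite -epsM eb eps1.
  have ebc : eps b = c' by rewrite -[LHS]mulr1 -hc1 mulrA e2 mul1r.
  by exists (eps y); rewrite ebc.
have [b' eb'] := eps_left_inv ub.
have eyb : b' = y by rewrite -[LHS]mulr1 -eb mulrA eb' mul1r.
by exists b; split=> //; rewrite -eyb.
Qed.

End Key.

Section Transfer.
Variables (R : pzRingType) (G : choiceType) (gmul : G -> G -> G) (gone : G) (ginv : G -> G).
Hypothesis grp : is_group gmul gone ginv.
Variable H : G -> Prop.
Hypothesis Hsg : is_subgroup gmul gone ginv H.
Variable t : seq G.
Hypothesis Ht : forall y, H y -> y \in t.

Definition t' := undup [seq y <- t | boolp.asbool (H y)].
Lemma mem_t' y : y \in t' <-> H y.
Proof.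
rewrite mem_undup mem_filter; split => [/andP [/boolp.asboolP //]|hy].
by rewrite Ht // andbT; apply/boolp.asboolP.
Qed.
Lemma uniq_t' : uniq t'.
Proof. exact: undup_uniq. Qed.

Definition tT := seq_sub t'.
Lemma HT (a : tT) : H (ssval a).
Proof. by apply/mem_t'; exact: ssvalP. Qed.
Definition tmk y (hy : H y) : tT := SeqSub (proj2 (mem_t' y) hy).

Let H1 : H gone. Proof. by case: Hsg. Qed.
Let HM x y : H x -> H y -> H (gmul x y). Proof. by case: Hsg => _ hm _; exact: hm. Qed.
Let HV x : H x -> H (ginv x). Proof. by case: Hsg => _ _ hv; exact: hv. Qed.

Definition tmul (a b : tT) : tT := tmk (HM (HT a) (HT b)).
Definition tone : tT := tmk H1.
Definition tinv (a : tT) : tT := tmk (HV (HT a)).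

Lemma tA : associative tmul.
Proof. by move=> a b c; apply: val_inj => /=; case: grp => A _ _ _ _; rewrite A. Qed.
Lemma t1m : left_id tone tmul.
Proof. by move=> a; apply: val_inj => /=; case: grp => _ h _ _ _; rewrite h. Qed.
Lemma tVm : left_inverse tone tinv tmul.
Proof. by move=> a; apply: val_inj => /=; case: grp => _ _ _ h _; rewrite h. Qed.

Definition Fd := @FGData (seq_sub t') tmul tone tinv tA t1m tVm.
Definition tgT := fgtype Fd.
Definition vT (h : tgT) : G := ssval (h : tT).

Lemma vTM (a b : tgT) : vT (a * b)%g = gmul (vT a) (vT b).
Proof. by []. Qed.
Lemma vT1 : vT 1%g = gone.
Proof. by []. Qed.
Lemma vT_inj : injective vT.
Proof. by move=> a b e; apply: (@val_inj _ _ (seq_sub t')). Qed.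
Lemma vT_in (h : tgT) : vT h \in t'.
Proof. exact: ssvalP. Qed.
Lemma vTX (h : tgT) n : vT (h ^+ n)%g = gpow gmul gone (vT h) n.
Proof. by elim: n => [|n IH] //; rewrite expgS vTM IH. Qed.


Definition proj (g : G) : tgT := insubd (tone : tT) g.
Lemma vT_proj g : g \in t' -> vT (proj g) = g.
Proof. by move=> gt; rewrite /vT /proj val_insubd gt. Qed.
Lemma proj_vT h : proj (vT h) = h.
Proof. by apply: vT_inj; rewrite vT_proj // vT_in. Qed.

Local Notation grp_ring := (grpring R G).
Local Notation S := (gring R tgT).

Definition iotaG (a : S) : grp_ring := [fsfun g in seq_fset tt t' => a (proj g) | 0].
Lemma iotaE a g : iotaG a g = if g \in t' then a (proj g) else 0.
Proof. by rewrite /iotaG fsfunE seq_fsetE. Qed.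
Lemma iota_vT a h : iotaG a (vT h) = a h.
Proof. by rewrite iotaE vT_in proj_vT. Qed.

Definition liftG (b : grp_ring) : S := [ffun h => b (vT h)].
Lemma liftK b : (forall g, g \in finsupp b -> g \in t') -> iotaG (liftG b) = b.
Proof.
move=> sb; apply/fsfunP => g; rewrite iotaE.
case: ifP => gt; first by rewrite ffunE vT_proj.
case: (boolp.pselect (g \in finsupp b)) => [/sb|/negP gb]; first by rewrite gt.
by rewrite fsfun_dflt.
Qed.
Lemma iota_inj : injective iotaG.
Proof. by move=> a b e; apply/ffunP => h; rewrite -!iota_vT e. Qed.

Lemma gr_addE (A B : grp_ring) g : gr_add A B g = A g + B g.
Proof.
rewrite /gr_add fsfunE; case: ifP => // /negbT.
rewrite in_fsetU negb_or => /andP [hA hB].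
by rewrite !fsfun_dflt // addr0.
Qed.
Lemma iotaD a b : iotaG (a + b) = gr_add (iotaG a) (iotaG b).
Proof.
apply/fsfunP => g; rewrite gr_addE !iotaE.
by case: ifP => _; rewrite ?addr0 // ffunE.
Qed.
Lemma gone_t' : gone \in t'.
Proof. by apply/mem_t'; case: Hsg. Qed.
Lemma iota1 : iotaG 1 = gr_one R gone.
Proof.
apply/fsfunP => g; rewrite /gr_one [RHS]fsfunE in_fset1 iotaE goneE.
case: ifP => gt.
  rewrite -(inj_eq vT_inj) vT_proj // vT1.
  by case: eqP.
by case: eqP => // eg; move: gt; rewrite eg gone_t'.
Qed.

Lemma sum_vT (F : G -> R) : \sum_(h : tgT) F (vT h) = \sum_(y <- t') F y.
Proof.
rewrite -(big_map vT xpredT F); apply: perm_big; apply: uniq_perm.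
- rewrite map_inj_uniq ?index_enum_uniq //; exact: vT_inj.
- exact: uniq_t'.
move=> y; apply/mapP/idP => [[h _ ->]|yt]; first exact: vT_in.
by exists (proj y); rewrite ?mem_index_enum ?vT_proj.
Qed.

Lemma sum_supp (A : grp_ring) (F : G -> R) :
  (forall g, g \in finsupp A -> g \in t') -> (forall y, A y = 0 -> F y = 0) ->
  \sum_(y <- finsupp A) F y = \sum_(y <- t') F y.
Proof.
move=> sA F0; symmetry; rewrite (bigID (fun y => y \in finsupp A)) /= [X in _ + X = _]big1_seq.
  rewrite addr0 -big_filter; apply: perm_big; apply: uniq_perm.
  - by rewrite filter_uniq // uniq_t'.
  - exact: fset_uniq.
  by move=> y; rewrite mem_filter; case: (boolP (y \in finsupp A)) => // /sA ->.
by move=> y /andP [yA _]; apply: F0; apply: fsfun_dflt.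
Qed.

Lemma gr_mulE (A B : grp_ring) g : gr_mul gmul A B g =
  \sum_(h <- finsupp A) \sum_(k <- finsupp B | gmul h k == g) A h * B k.
Proof.
rewrite /gr_mul fsfunE; case: ifP => // /negbT gn.
rewrite big1_seq // => h /andP [_ hA]; rewrite big1_seq // => k /andP [/eqP e kB].
by exfalso; move: gn; rewrite -e; move/negP; apply; apply: in_imfset2.
Qed.

Lemma iotaM a b : iotaG (a * b) = gr_mul gmul (iotaG a) (iotaG b).
Proof.
have sI c : forall g, g \in finsupp (iotaG c) -> g \in t'.
  by move=> g; rewrite mem_finsupp iotaE; case: ifP => //; rewrite eqxx.
apply/fsfunP => g; rewrite gr_mulE.
rewrite (sum_supp (sI a)) => [|y ->]; last first.
  by rewrite big1 // => k _; rewrite mul0r.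
rewrite -sum_vT.
under eq_bigr => h _.
  rewrite big_mkcond /= (sum_supp (sI b)) => [|y ->]; last by rewrite mulr0 if_same.
  rewrite -sum_vT iota_vT.
  over.
rewrite iotaE /=; case: ifP => gt; last first.
  rewrite big1 // => h _; rewrite big1 // => k _.
  by case: eqP => // e; move: gt; rewrite -e -vTM vT_in.
rewrite gmulE; apply: eq_bigr => h _.
rewrite (bigD1 ((h^-1) * proj g)%g) // big1 => [|k kn].
  by rewrite -vTM mulKVg vT_proj // eqxx iota_vT /= addr0.
rewrite -vTM -{1}(vT_proj gt) (inj_eq vT_inj); case: eqP => // e.
by move: kn; rewrite -e mulKg eqxx.
Qed.

End Transfer.

Lemma Delta0 (R : pzRingType) : Delta (0 : R).
Proof. by move=> u uu; rewrite add0r. Qed.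
Lemma DeltaD (R : pzRingType) (a b : R) : Delta a -> Delta b -> Delta (a + b).
Proof. by move=> Da Db u uu; rewrite -addrA; apply: Da; apply: Db. Qed.
Lemma Delta_sum (R : pzRingType) (I : Type) (s : seq I) (F : I -> R) :
  (forall i, Delta (F i)) -> Delta (\sum_(i <- s) F i).
Proof.
move=> DF; elim: s => [|i s IH]; first by rewrite big_nil; exact: Delta0.
by rewrite big_cons; apply: DeltaD.
Qed.

Theorem lemma3p5 (R : pzRingType) (p : nat) (G : choiceType)
  (gmul : G -> G -> G) (gone : G) (ginv : G -> G) :
  prime p ->
  jacobson (p%:R : R) ->
  is_group gmul gone ginv ->
  locally_finite gmul gone ginv ->
  p_group gmul gone p ->
  forall x : grpring R G, (forall g : G, Delta (x g)) -> gr_Delta gmul gone x.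
Proof.
move=> pr jac grp lf pgrp x Dx u [v [uv vu]].
pose s : seq G := (enum_fset (finsupp x) ++ enum_fset (finsupp u) ++ enum_fset (finsupp v)).
have [t Ht] := lf s.
pose H := gen_subgroup gmul gone ginv s.
have Hsg : is_subgroup gmul gone ginv H.
  split.
  - by move=> K [K1 _ _] _.
  - by move=> a b Ha Hb K Ksg Ks; case: (Ksg) => _ KM _; apply: KM; [apply: Ha|apply: Hb].
  - by move=> a Ha K Ksg Ks; case: (Ksg) => _ _ KV; apply: KV; apply: Ha.
have Hs : forall y, y \in s -> H y by move=> y ys K _ Ks; exact: Ks.
have sT : forall (b : grpring R G), (forall g, g \in finsupp b -> g \in s) ->
    forall g, g \in finsupp b -> g \in t' H t.
  by move=> b bs g gb; apply/(mem_t' Ht); apply: Hs; apply: bs.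
have sx : forall g, g \in finsupp x -> g \in t' H t.
  by apply: sT => g gb; rewrite !mem_cat gb.
have su : forall g, g \in finsupp u -> g \in t' H t.
  by apply: sT => g gb; rewrite !mem_cat gb orbT.
have sv : forall g, g \in finsupp v -> g \in t' H t.
  by apply: sT => g gb; rewrite !mem_cat gb !orbT.
pose tgT := tgT grp Hsg Ht.
have pg : (p.-group [set: tgT])%g.
  apply/pgroupP => q qpr qdvd.
  have [y _ oy] := Cauchy qpr qdvd.
  have [n en] := pgrp (vT (y : tgT)).
  have y1 : (y ^+ (p ^ n) = 1)%g.
    by apply: vT_inj; rewrite vTX en vT1.
  have : (q %| p ^ n)%N by rewrite -oy order_dvdn y1.
  rewrite Euclid_dvdX // => /andP [qp _].
  by rewrite inE -(dvdn_prime2 qpr pr).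
have hp := jac_unit jac.
pose X := @liftG R _ _ _ _ grp _ Hsg _ Ht x.
pose U := @liftG R _ _ _ _ grp _ Hsg _ Ht u.
pose V := @liftG R _ _ _ _ grp _ Hsg _ Ht v.
have iX : iotaG X = x by exact: (liftK grp Hsg Ht sx).
have iU : iotaG U = u by exact: (liftK grp Hsg Ht su).
have iV : iotaG V = v by exact: (liftK grp Hsg Ht sv).
have UV : U * V = 1.
  by apply: (@iota_inj R _ _ _ _ grp _ Hsg _ Ht); rewrite iotaM iU iV uv iota1.
have VU : V * U = 1.
  by apply: (@iota_inj R _ _ _ _ grp _ Hsg _ Ht); rewrite iotaM iU iV vu iota1.
have DX : Delta (eps X).
  rewrite /eps; apply: Delta_sum => h; rewrite ffunE; exact: Dx.
have uU : is_unit (eps U) by exists (eps V); rewrite -!epsM UV VU eps1.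
have uXU : is_unit (eps (X + U)) by rewrite epsD; exact: DX _ uU.
have [Z [h1 h2]] := eps_unit pr pg hp uXU.
exists (iotaG Z).
by rewrite -iX -iU -iotaD -!iotaM h1 h2 iota1.
Qed.
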